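(* Let $A_3$ be the complex $3$-Lie algebra with basis $\{e_1,e_2,e_3\}$ whose only nonzero bracket of basis elements (up to skew-symmetry) is $[e_1,e_2,e_3]=e_1$, and let $(A_3,\cdot,[\cdot,\cdot,\cdot])$ be a transposed Poisson $3$-Lie algebra. Then there exist $\beta_{21}^2,\beta_{22}^2,\beta_{23}^2,\beta_{31}^2,\beta_{32}^2,\beta_{33}^2,\beta_{31}^3,\beta_{32}^3,\beta_{33}^3\in\mathbb{C}$ such that $e_1\cdot e_1=0$ and $$\begin{aligned} e_1\cdot e_2&=\tfrac{\beta_{22}^2+\beta_{33}^2}{2}e_1, & e_1\cdot e_3&=\tfrac{\beta_{32}^2+\beta_{33}^3}{2}e_1,\\ e_2\cdot e_2&=\beta_{21}^2e_1+\beta_{22}^2e_2+\beta_{23}^2e_3, & e_2\cdot e_3&=\beta_{31}^2e_1+\beta_{32}^2e_2+\beta_{33}^2e_3,\\ e_3\cdot e_3&=\beta_{31}^3e_1+\beta_{32}^3e_2+\beta_{33}^3e_3. \end{aligned}$$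
   Context: A transposed Poisson $3$-Lie algebra is a triple $(A,\cdot,[\cdot,\cdot,\cdot])$ where $(A,\cdot)$ is a commutative algebra (a commutative bilinear product; associativity is not required here), $(A,[\cdot,\cdot,\cdot])$ is a $3$-Lie algebra, and $3u\cdot[x,y,z]=[u\cdot x,y,z]+[x,u\cdot y,z]+[x,y,u\cdot z]$ for all $x,y,z,u\in A$. *)

(* Defs.v *)
From HB Require Import structures.
From mathcomp Require Import all_boot all_order all_algebra.
From mathcomp Require Import complex.
From mathcomp Require Import Rstruct.
Set Implicit Arguments. Unset Strict Implicit. Unset Printing Implicit Defensive.
Import Order.TTheory GRing.Theory Num.Theory.
Local Open Scope ring_scope.

Notation C := (Rdefinitions.R)[i].

(* The underlying vector space of A_3 : C^3 (row vectors), basis e_1,e_2,e_3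
   being e 0, e 1, e 2. *)
Notation A3 := 'rV[C]_3.
Definition e (i : 'I_3) : A3 := delta_mx 0 i.

(* The ternary bracket of A_3: the trilinear skew-symmetric extension of
   [e1,e2,e3] = e1 (all other brackets of basis elements zero up to skew-symmetry),
   i.e. [x,y,z] = (sum over permutations of the structure constants) e1. *)
Definition br3 (x y z : A3) : A3 :=
  (x 0 0 * (y 0 1 * z 0 2 - y 0 2 * z 0 1)
   - x 0 1 * (y 0 0 * z 0 2 - y 0 2 * z 0 0)
   + x 0 2 * (y 0 0 * z 0 1 - y 0 1 * z 0 0)) *: e 0.

Definition commutative_bilinear (mul : A3 -> A3 -> A3) : Prop :=
  (forall (a : C) (x y z : A3), mul (a *: x + y) z = a *: mul x z + mul y z) /\
  (forall x y : A3, mul x y = mul y x).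

Definition tp3_compatible (mul : A3 -> A3 -> A3) : Prop :=
  forall x y z u : A3,
    3%:R *: mul u (br3 x y z)
    = br3 (mul u x) y z + br3 x (mul u y) z + br3 x y (mul u z).

Definition transposed_Poisson_3Lie_on_A3 (mul : A3 -> A3 -> A3) : Prop :=
  commutative_bilinear mul /\ tp3_compatible mul.

(* Main.v *)
Require Import Defs.
From HB Require Import structures.
From mathcomp Require Import all_boot all_order all_algebra.
From mathcomp Require Import complex Rstruct.
From mathcomp Require Import ring.
Import GRing.Theory Num.Theory.
Local Open Scope ring_scope.

Lemma eE (i j : 'I_3) : e i 0 j = (i == j)%:R.
Proof. by rewrite /e mxE eqxx eq_sym. Qed.

Lemma decomp (v : A3) : v = v 0 0 *: e 0 + v 0 1 *: e 1 + v 0 2 *: e 2.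
Proof.
apply/rowP => j; rewrite !mxE.
case: j => [[|[|[|j]]] Hj] //=; rewrite /= ?mulr1 ?mulr0 ?add0r ?addr0 //;
  try (congr (v 0 _); exact: val_inj).
Qed.

Lemma key (mul : A3 -> A3 -> A3) (u : A3) : tp3_compatible mul ->
  3%:R * mul u (e 0) 0 0 = mul u (e 0) 0 0 + mul u (e 1) 0 1 + mul u (e 2) 0 2
  /\ mul u (e 0) = mul u (e 0) 0 0 *: e 0.
Proof.
move=> H; have := H (e 0) (e 1) (e 2) u.
have -> : br3 (e 0) (e 1) (e 2) = e 0.
  rewrite /br3 !eE /= [X in X *: _](_ : _ = 1) ?scale1r //; ring.
have Hb : forall v w z : A3, br3 v w z =
  (v 0 0 * (w 0 1 * z 0 2 - w 0 2 * z 0 1)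
   - v 0 1 * (w 0 0 * z 0 2 - w 0 2 * z 0 0)
   + v 0 2 * (w 0 0 * z 0 1 - w 0 1 * z 0 0)) *: e 0 by [].
rewrite !Hb !eE /=.
set M := mul u (e 0).
move=> E.
have E0 := congr1 (fun m : A3 => m 0 0) E.
have E1 := congr1 (fun m : A3 => m 0 1) E.
have E2 := congr1 (fun m : A3 => m 0 2) E.
move: E0 E1 E2; rewrite /= !mxE /=.
move=> E0 E1 E2.
have n3 : (3%:R : C) != 0 by rewrite pnatr_eq0.
split.
  rewrite E0; ring.
apply/rowP => j; rewrite !mxE.
case: j => [[|[|[|j]]] Hj] //=.
- rewrite mulr1; congr (M 0 _); exact: val_inj.
- rewrite mulr0; have : 3%:R * M 0 1 = 0 by rewrite E1; ring.
  move/eqP; rewrite mulf_eq0 (negbTE n3) /= => /eqP <-; congr (M 0 _); exact: val_inj.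
- rewrite mulr0; have : 3%:R * M 0 2 = 0 by rewrite E2; ring.
  move/eqP; rewrite mulf_eq0 (negbTE n3) /= => /eqP <-; congr (M 0 _); exact: val_inj.
Qed.

Theorem lemma3p5 (mul : A3 -> A3 -> A3) :
  transposed_Poisson_3Lie_on_A3 mul ->
  exists b21_2 b22_2 b23_2 b31_2 b32_2 b33_2 b31_3 b32_3 b33_3 : C,
    mul (e 0) (e 0) = 0 /\
        mul (e 0) (e 1) = ((b22_2 + b33_2) / 2%:R) *: e 0 /\
        mul (e 0) (e 2) = ((b32_2 + b33_3) / 2%:R) *: e 0 /\
        mul (e 1) (e 1) = b21_2 *: e 0 + b22_2 *: e 1 + b23_2 *: e 2 /\
        mul (e 1) (e 2) = b31_2 *: e 0 + b32_2 *: e 1 + b33_2 *: e 2 /\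
      mul (e 2) (e 2) = b31_3 *: e 0 + b32_3 *: e 1 + b33_3 *: e 2.
Proof.
move=> [[_ Hc] Ht].
have [K0 M0] := key mul (e 0) Ht.
have [K1 M1] := key mul (e 1) Ht.
have [K2 M2] := key mul (e 2) Ht.
have n2 : (2%:R : C) != 0 by rewrite pnatr_eq0.
have Z1 : mul (e 0) (e 1) 0 1 = 0 by rewrite Hc M1 !mxE /= mulr0.
have Z2 : mul (e 0) (e 2) 0 2 = 0 by rewrite Hc M2 !mxE /= mulr0.
exists (mul (e 1) (e 1) 0 0), (mul (e 1) (e 1) 0 1), (mul (e 1) (e 1) 0 2),
  (mul (e 1) (e 2) 0 0), (mul (e 1) (e 2) 0 1), (mul (e 1) (e 2) 0 2),
  (mul (e 2) (e 2) 0 0), (mul (e 2) (e 2) 0 1), (mul (e 2) (e 2) 0 2).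
split; [|split; [|split; [|split; [|split]]]]; try exact: decomp.
- rewrite M0; rewrite Z1 Z2 in K0.
  have -> : mul (e 0) (e 0) 0 0 = 0.
    have : 2%:R * mul (e 0) (e 0) 0 0 = 0.
      have -> : 2%:R * mul (e 0) (e 0) 0 0 = 3%:R * mul (e 0) (e 0) 0 0 - mul (e 0) (e 0) 0 0 by ring.
      rewrite K0 !addr0; ring.
    by move/eqP; rewrite mulf_eq0 (negbTE n2) /= => /eqP.
  by rewrite scale0r.
- rewrite Hc M1; congr (_ *: _).
  apply: (mulfI n2); rewrite mulrCA (divff n2) mulr1.
  have -> : 2%:R * mul (e 1) (e 0) 0 0 = 3%:R * mul (e 1) (e 0) 0 0 - mul (e 1) (e 0) 0 0 by ring.
  rewrite K1; ring.
- rewrite Hc M2; congr (_ *: _).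
  apply: (mulfI n2); rewrite mulrCA (divff n2) mulr1.
  rewrite [mul (e 2) (e 1)]Hc in K2.
  have -> : 2%:R * mul (e 2) (e 0) 0 0 = 3%:R * mul (e 2) (e 0) 0 0 - mul (e 2) (e 0) 0 0 by ring.
  rewrite K2; ring.
Qed.
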